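(* Let $\mathcal{T} = \{T_1, \ldots, T_t\}$ be a set of unrooted binary phylogenetic trees on a common leaf set $X$, let $\mathcal{Q}$ be the set of quartets that are incompatible quartets of $T_1$ and $T_i$ for some $2 \le i \le t$, and let $\tilde x$ be an optimal solution of the linear program $$\text{minimize } \sum_{e \in E(T_1)} x_e \quad \text{s.t. } \sum_{e \in L(Q)} x_e \ge 1 \ \ \forall Q \in \mathcal{Q}, \qquad x_e \ge 0\ \ \forall e \in E(T_1).$$ Let $E \subseteq E(T_1)$ be the edge set produced by the following rounding procedure. Root $T_1$ at an arbitrary leaf $r$; for each edge $e$ let $u_e$ be its endpoint on the path from $r$ to the other endpoint $v_e$. Start with $E = \emptyset$. For the current $E$ and each edge $e$, let $D(e)$ be the set of edges $f$ such that $v_e$ lies on the path from $r$ to $v_f$ and the path from $v_e$ to $v_f$ contains no edge of $E$, and let $w(e) = \sum_{f \in D(e)} \tilde x_f$. While there exists an edge $e$ with $w(e) \ge 1/4$ and $w(f) < 1/4$ for all $f \in D(e) \setminus \{e\}$, add one such edge $e$ to $E$ (recomputing $D$ and $w$ afterwards); stop when every edge $e \in E(T_1) \setminus E$ has $w(e) < 1/4$. Then the final set $E$ is a feasible solution of the integer program $$\text{minimize } \sum_{e \in E(T_1)} x_e \quad \text{s.t. } \sum_{e \in L(Q)} x_e \ge 1 \ \ \forall Q \in \mathcal{Q}, \qquad x_e \in \{0,1\}\ \ \forall e \in E(T_1),$$ i.e., $L(Q) \cap E \ne \emptyset$ for every $Q \in \mathcal{Q}$.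
   Context: A (binary) phylogenetic tree on a finite set $X$ is an unrooted tree whose internal vertices have degree 3 and whose leaves are bijectively labelled by $X$. Two phylogenetic trees on $X$ are isomorphic ($\cong$) if there is a graph isomorphism between them fixing every leaf label. For $Y \subseteq X$, $T[Y]$ is the minimal subtree of $T$ connecting the leaves in $Y$, and $T|_Y$ is obtained from $T[Y]$ by suppressing all degree-2 vertices. A quartet is a 4-element subset of $X$; for $Q=\{a,b,c,d\}$, $ab|cd$ is the tree on $Q$ where $a,b$ share a neighbour $u$, $c,d$ share a neighbour $v$, and $u,v$ are adjacent. If $T_1|_Q \cong ab|cd$, $L(Q)$ is the set of edges of $T_1[\{a,b\}] \cup T_1[\{c,d\}]$. $Q$ is an incompatible quartet of $T_1,T_i$ if $T_1|_Q \not\cong T_i|_Q$. A $0/1$ vector $x$ is identified with the edge set $\{e : x_e = 1\}$. *)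

(* Defs.v *)
From HB Require Import structures.
From mathcomp Require Import all_boot all_order all_algebra.
From mathcomp Require Import boolp reals.

Set Implicit Arguments.
Unset Strict Implicit.
Unset Printing Implicit Defensive.

Import Order.TTheory GRing.Theory Num.Theory.

Record phylo (X : finType) := Phylo {
  pV : finType;
  padj : rel pV;
  plab : X -> pV;
  padj_sym : symmetric padj;
  padj_irr : irreflexive padj;
  pconn : forall u v : pV, exists p, path padj u p /\ last u p = v;
  pacyc : forall (u : pV) (p : seq pV),
      ~ [/\ uniq (u :: p), 2 <= size p, path padj u p & padj (last u p) u];
  plab_inj : injective plab;
  pdeg_leaf : forall v, v \in codom plab -> #|[pred w | padj v w]| <= 1;
  pdeg_int : forall v, v \notin codom plab -> #|[pred w | padj v w]| = 3
}.

Section TreeNotions.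
Variables (X : finType) (T : phylo X).
Local Notation V := (pV T).
Local Notation adj := (@padj X T).
Local Notation lab := (@plab X T).

Definition tpath (u v : V) (p : seq V) : Prop :=
  [/\ path adj u p, last u p = v & uniq (u :: p)].

Definition on_path (w u v : V) : Prop :=
  exists p, tpath u v p /\ w \in u :: p.

(* edges are the 2-element vertex sets {u,v} with u adjacent to v *)
Definition path_edges (u : V) (p : seq V) : seq {set V} :=
  [seq [set z.1; z.2] | z <- zip (u :: p) p].

Definition edge_on_path (e : {set V}) (u v : V) : Prop :=
  exists p, tpath u v p /\ e \in path_edges u p.

Definition is_edge (e : {set V}) : bool :=
  [exists u, exists v, adj u v && (e == [set u; v])].

Definition edges : {set {set V}} := [set e | is_edge e].

Definition span_v (Y : {set X}) (w : V) : Prop :=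
  exists a b, [/\ a \in Y, b \in Y & on_path w (lab a) (lab b)].

Definition span_e (Y : {set X}) (e : {set V}) : Prop :=
  exists a b, [/\ a \in Y, b \in Y & edge_on_path e (lab a) (lab b)].

Definition span_nb (Y : {set X}) (w w' : V) : Prop := span_e Y [set w; w'].

Definition span_deg2 (Y : {set X}) (w : V) : Prop :=
  exists n1 n2, [/\ n1 != n2, span_nb Y w n1, span_nb Y w n2 &
                    forall n, span_nb Y w n -> n = n1 \/ n = n2].

(* T|_Y : vertices of T[Y] of degree <> 2 in T[Y] ... *)
Definition kept (Y : {set X}) (w : V) : Prop := span_v Y w /\ ~ span_deg2 Y w.

(* ... two of them are adjacent in T|_Y iff the path between them in T has
   all its interior vertices suppressed (degree 2 in T[Y]). *)
Definition radj (Y : {set X}) (u v : V) : Prop :=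
  [/\ kept Y u, kept Y v, u != v &
      exists p, tpath u v p /\
        forall w, w \in behead (belast u p) -> ~ kept Y w].

End TreeNotions.

Arguments tpath {X} T u v p.
Arguments on_path {X} T w u v.
Arguments path_edges {X} T u p.
Arguments edge_on_path {X} T e u v.
Arguments is_edge {X} T e.
Arguments edges {X} T.
Arguments span_v {X} T Y w.
Arguments span_e {X} T Y e.
Arguments span_nb {X} T Y w w'.
Arguments span_deg2 {X} T Y w.
Arguments kept {X} T Y w.
Arguments radj {X} T Y u v.

Definition restr_iso (X : finType) (T T' : phylo X) (Y : {set X}) : Prop :=
  exists f : pV T -> pV T',
  [/\ forall w, kept T Y w -> kept T' Y (f w),
      forall w1 w2, kept T Y w1 -> kept T Y w2 -> f w1 = f w2 -> w1 = w2,
      forall w', kept T' Y w' -> exists w, kept T Y w /\ f w = w',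
      forall w1 w2, kept T Y w1 -> kept T Y w2 ->
         (radj T Y w1 w2 <-> radj T' Y (f w1) (f w2))
    & forall x, x \in Y -> f (plab T x) = plab T' x].

(* The quartet tree ab|cd: leaves qa qb qc qd, inner vertices qu qv. *)
Inductive qvert := qa | qb | qc | qd | qu | qv.

Definition qadj (s t : qvert) : bool :=
  match s, t with
  | qa, qu | qu, qa | qb, qu | qu, qb
  | qc, qv | qv, qc | qd, qv | qv, qd
  | qu, qv | qv, qu => true
  | _, _ => false
  end.

Definition quartet_iso (X : finType) (T : phylo X) (a b c d : X) : Prop :=
  let Y := [set a; b; c; d] in
  exists g : pV T -> qvert,
  [/\ forall w1 w2, kept T Y w1 -> kept T Y w2 -> g w1 = g w2 -> w1 = w2,
      forall q, exists w, kept T Y w /\ g w = q,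
      forall w1 w2, kept T Y w1 -> kept T Y w2 ->
         (radj T Y w1 w2 <-> qadj (g w1) (g w2)),
      g (plab T a) = qa /\ g (plab T b) = qb
    & g (plab T c) = qc /\ g (plab T d) = qd].

Definition Lset (X : finType) (T1 : phylo X) (Q : {set X}) (e : {set pV T1}) : Prop :=
  exists a b c d, [/\ Q = [set a; b; c; d], quartet_iso T1 a b c d &
     edge_on_path T1 e (plab T1 a) (plab T1 b) \/
     edge_on_path T1 e (plab T1 c) (plab T1 d)].

(* Q is an incompatible quartet of T1 and some T_i, i = 2..t
   (the trees T_2..T_t are given as the family Ts : 'I_n -> phylo X) *)
Definition incompat (X : finType) (T1 : phylo X) (n : nat) (Ts : 'I_n -> phylo X)
  (Q : {set X}) : Prop :=
  #|Q| = 4 /\ exists i, ~ restr_iso T1 (Ts i) Q.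

Section LP.
Variables (R : realType) (X : finType) (T1 : phylo X) (Qs : {set X} -> Prop).
Local Notation V := (pV T1).
Local Open Scope ring_scope.

Definition LP_feasible (y : {set V} -> R) : Prop :=
  (forall e, e \in edges T1 -> 0 <= y e) /\
  (forall Q, Qs Q -> 1 <= \sum_(e in edges T1 | `[< Lset Q e >]) y e).

Definition LP_optimal (x : {set V} -> R) : Prop :=
  LP_feasible x /\
  forall y, LP_feasible y ->
    \sum_(e in edges T1) x e <= \sum_(e in edges T1) y e.

Variables (r : V) (x : {set V} -> R).

Definition lowend (e : {set V}) (v : V) : Prop :=
  v \in e /\ exists w, [/\ w \in e, w != v & on_path T1 w r v].

Definition inD (E : {set {set V}}) (e f : {set V}) : Prop :=
  is_edge T1 f /\
  exists ve vf, [/\ lowend e ve, lowend f vf, on_path T1 ve r vf &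
                   ~ exists g, g \in E /\ edge_on_path T1 g ve vf].

Definition wgt (E : {set {set V}}) (e : {set V}) : R :=
  \sum_(f in edges T1 | `[< inD E e f >]) x f.

Definition eligible (E : {set {set V}}) (e : {set V}) : Prop :=
  [/\ e \in edges T1, 1 / 4 <= wgt E e &
      forall f, inD E e f -> f != e -> wgt E f < 1 / 4].

Inductive reach : {set {set V}} -> Prop :=
  | reach0 : reach set0
  | reachS E e : reach E -> eligible E e -> reach (e |: E).

Definition round_final (E : {set {set V}}) : Prop :=
  reach E /\ forall e, e \in edges T1 -> e \notin E -> wgt E e < 1 / 4.

End LP.

Arguments LP_feasible {R X} T1 Qs y.
Arguments LP_optimal {R X} T1 Qs x.
Arguments lowend {X} T1 r e v.
Arguments inD {X} T1 r E e f.
Arguments wgt {R X} T1 r x E e.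
Arguments eligible {R X} T1 r x E e.
Arguments reach {R X} T1 r x _.
Arguments round_final {R X} T1 r x E.
Arguments Lset {X} T1 Q e.
Arguments incompat {X} T1 {n} Ts Q.

(* Main.v *)
Require Import Defs.
From HB Require Import structures.
From mathcomp Require Import all_boot all_order all_algebra.
From mathcomp Require Import boolp reals.
From mathcomp Require Import ring lra.
Import Order.TTheory GRing.Theory Num.Theory.

Set Implicit Arguments.
Unset Strict Implicit.
Unset Printing Implicit Defensive.

Section Graph.
Variables (X : finType) (T : phylo X).
Local Notation V := (pV T).
Local Notation adj := (@padj X T).

Lemma adj_sym (x y : V) : adj x y = adj y x.
Proof. exact: padj_sym. Qed.

Lemma adj_neq (x y : V) : adj x y -> x != y.
Proof. by apply: contraTneq => ->; rewrite padj_irr. Qed.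

Lemma revP (u : V) q : path adj u q -> path adj (last u q) (rev (belast u q)).
Proof.
rewrite rev_path => H. by rewrite (@eq_path _ _ adj) // => a b; rewrite adj_sym.
Qed.

Lemma last_rev_belast (A : V) p : last (last A p) (rev (belast A p)) = A.
Proof. by case: p => [|y s] //=; rewrite rev_cons last_rcons. Qed.

Lemma tpath_cons (u v y : V) s : tpath T u v (y :: s) -> adj u y /\ tpath T y v s.
Proof.
case=> /= /andP[a b] c /andP[_ d]; by split.
Qed.

Lemma tpath_cat (u v : V) p1 p2 : tpath T u v (p1 ++ p2) ->
  tpath T u (last u p1) p1 /\ tpath T (last u p1) v p2.
Proof.
case; rewrite cat_path last_cat => /andP[h1 h2] hl.
rewrite -cat_cons cat_uniq => /and3P[u1 hd u2]; split => //.
split => //=; rewrite u2 andbT.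
apply/negP => hm; move/hasP: hd; apply; exists (last u p1) => //.
exact: mem_last.
Qed.

Lemma split_mem (w u : V) p : w \in u :: p -> exists p1 p2, p = p1 ++ p2 /\ last u p1 = w.
Proof.
rewrite in_cons => /orP[/eqP->|]; first by exists [::], p.
case/splitPr => p1 p2; exists (rcons p1 w), p2; by rewrite cat_rcons last_rcons.
Qed.

Lemma prefix_le (a b s1 s2 : seq V) : a ++ s1 = b ++ s2 -> size a <= size b ->
  exists t, b = a ++ t.
Proof.
move=> E le; exists (drop (size a) b).
have : take (size a) (a ++ s1) = take (size a) (b ++ s2) by rewrite E.
rewrite take_size_cat // takel_cat // => Ea; by rewrite {1}Ea cat_take_drop.
Qed.

Lemma first_in (s t : seq V) : has (mem t) s ->
  exists a z b, [/\ s = a ++ z :: b, z \in t & forall w, w \in a -> w \notin t].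
Proof.
elim: s => //= x s IH; case: (boolP (x \in t)) => hx /=.
  by move=> _; exists [::], x, s.
case/IH => a [z [b [-> hz ha]]]; exists (x :: a), z, b; split => // w.
by rewrite in_cons => /orP[/eqP->|/ha].
Qed.

Lemma cyc_contra (u : V) c z d a b :
  path adj u (c ++ z :: d) -> path adj u (a ++ z :: b) ->
  uniq (u :: c ++ z :: d) -> uniq (u :: a ++ z :: b) ->
  (forall w, w \in a -> w \notin c ++ z :: d) ->
  (c != [::]) || (a != [::]) -> False.
Proof.
move=> p1 p2 u1 u2 ha hne.
apply: (@pacyc X T u (c ++ z :: rev a)).
have hpa : path adj u (rcons a z).
  by move: p2; rewrite cat_path rcons_path => /andP[-> /= /andP[-> _]].
have := revP hpa; rewrite last_rcons belast_rcons rev_cons rcons_path => /andP[pa cl].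
split.
- rewrite -cat_rcons -cat_cons cat_uniq rev_uniq; apply/and3P; split.
  + by move: u1; rewrite -cat_rcons -cat_cons cat_uniq => /andP[].
  + apply/hasPn => w; rewrite mem_rev => wa; rewrite in_cons mem_rcons negb_or.
    apply/andP; split.
      apply/negP => /eqP E; move: u2; rewrite /= mem_cat -E wa /=. by [].
    have := ha _ wa; rewrite !mem_cat !in_cons; apply: contra => /orP[->|->]; by rewrite ?orbT.
  + by move: u2 => /= /andP[_]; rewrite cat_uniq => /andP[].
- by rewrite size_cat /= size_rev addnS ltnS addn_gt0 !lt0n !size_eq0.
- by rewrite cat_path /= pa andbT; move: p1; rewrite cat_path => /andP[-> /= /andP[-> _]].
- by rewrite last_cat.
Qed.

Lemma tpath_uniq (u v : V) p p' : tpath T u v p -> tpath T u v p' -> p = p'.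
Proof.
elim: p u p' => [|y p1 IH] u [|y' p1'] //.
- case=> _ /= -> _ [_ hl /= /andP[hu _]]; exfalso.
  have := mem_last y' p1'; rewrite [last _ _]hl; by rewrite (negbTE hu).
- case=> _ hl /= /andP[hu _] [_ /= hl' _]; exfalso.
  have := mem_last y p1; rewrite [last _ _]hl -hl'; by rewrite (negbTE hu).
move=> H H'; have [ay ty] := tpath_cons H; have [ay' ty'] := tpath_cons H'.
case: (eqVneq y y') => [E|ne].
  by subst y'; rewrite (IH _ _ ty ty').
exfalso.
case: H => pP lP uP; case: H' => pP' lP' uP'.
have vP : v \in y :: p1 by rewrite -lP /=; exact: mem_last.
have vP' : v \in y' :: p1' by rewrite -lP' /=; exact: mem_last.
have : has (mem (y :: p1)) (y' :: p1') by apply/hasP; exists v.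
case/first_in => a [z [b [Ea zin ha]]].
have [c [d Ec]] : exists c d, y :: p1 = c ++ z :: d.
  by case/splitPr: zin => c d; exists c, d.
rewrite Ec in pP uP ha; rewrite Ea in pP' uP'.
apply: (cyc_contra pP pP' uP uP' ha).
move: Ec Ea; case: c {pP uP ha} => [|? ?] //=; case: a {pP' uP'} => [|? ?] //=.
by case=> E1 _ [E2 _]; move: ne; rewrite E1 E2 eqxx.
Qed.


Lemma PE_cons (u y : V) s : path_edges T u (y :: s) = [set u; y] :: path_edges T y s.
Proof. by []. Qed.

Lemma PE_cat (u : V) p1 p2 :
  path_edges T u (p1 ++ p2) = path_edges T u p1 ++ path_edges T (last u p1) p2.
Proof. by elim: p1 u => [|y s IH] u //=; rewrite !PE_cons IH. Qed.

Lemma PE_mem (u : V) p g : g \in path_edges T u p ->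
  exists p1 y p2, p = p1 ++ y :: p2 /\ g = [set last u p1; y].
Proof.
elim: p u => [|y s IH] u //; rewrite PE_cons in_cons => /orP[/eqP->|].
  by exists [::], y, s.
case/IH => p1 [y' [p2 [-> ->]]]; by exists (y :: p1), y', p2.
Qed.

Lemma PE_rev (A : V) p :
  path_edges T (last A p) (rev (belast A p)) = rev (path_edges T A p).
Proof.
elim: p A => [|y s IH] A //=.
rewrite rev_cons -cats1 PE_cat last_rev_belast IH PE_cons rev_cons -cats1.
by rewrite /= setUC.
Qed.

Lemma tpath_rev (A B : V) p : tpath T A B p ->
  tpath T B A (rev (belast A p)) /\
  path_edges T B (rev (belast A p)) = rev (path_edges T A p).
Proof.
case=> hp hl hu; rewrite -hl PE_rev; split => //; split.
- exact: revP.
- exact: last_rev_belast.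
- by rewrite -rev_rcons -lastI rev_uniq.
Qed.

Lemma rev_split (A : V) p1 y p2 :
  rev (belast A (p1 ++ y :: p2)) = rev (belast y p2) ++ last A p1 :: rev (belast A p1).
Proof. by rewrite belast_cat /= rev_cat rev_cons cat_rcons. Qed.

Variable r : V.

Definition tpathb (v : V) (p : seq V) := [&& path adj r p, last r p == v & uniq (r :: p)].

Lemma tpathb_ex v : exists p, tpathb v p.
Proof.
have [p [hp hl]] := pconn r v.
case/shortenP: hp hl => p' hp' hu _ hl; exists p'; by rewrite /tpathb hp' hu hl eqxx.
Qed.

Definition rp v := xchoose (tpathb_ex v).

Lemma rpP v : tpath T r v (rp v).
Proof. by have /and3P[a /eqP b c] := xchooseP (tpathb_ex v). Qed.

Lemma rp_last v : last r (rp v) = v.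
Proof. by case: (rpP v). Qed.

Lemma rp_mem v : v \in r :: rp v.
Proof. by rewrite -{1}(rp_last v) mem_last. Qed.

Lemma rp_uniq v p : tpath T r v p -> p = rp v.
Proof. move=> h; exact: tpath_uniq h (rpP v). Qed.

Lemma on_path_rp w v : on_path T w r v -> w \in r :: rp v.
Proof. by case=> p [h hw]; rewrite -(rp_uniq h). Qed.

Lemma rp_pref w v : w \in r :: rp v -> exists s, rp v = rp w ++ s /\ tpath T w v s.
Proof.
case/split_mem => p1 [p2 [E hl]].
have := rpP v; rewrite E => /tpath_cat; rewrite hl => -[h1 h2].
by exists p2; rewrite -(rp_uniq h1).
Qed.

Lemma ADJ x y : adj x y -> rp y = rcons (rp x) y \/ rp x = rcons (rp y) x.
Proof.
move=> axy; case: (boolP (y \in r :: rp x)) => hy.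
  right; have [s [E ts]] := rp_pref hy.
  have t1 : tpath T y x [:: x].
    split => //=; first by rewrite adj_sym axy.
    by rewrite inE andbT eq_sym adj_neq.
  by rewrite E (tpath_uniq ts t1) cats1.
left; symmetry; apply: rp_uniq; case: (rpP x) => h1 h2 h3; split.
- by rewrite rcons_path h1 rp_last.
- by rewrite last_rcons.
- by rewrite -rcons_cons rcons_uniq hy h3.
Qed.

Lemma DESC l (x y B : V) : tpath T x B (y :: l) -> rp y = rcons (rp x) y -> rp B = rp y ++ l.
Proof.
elim: l x y => [|z l IH] x y.
  by case=> _ /= -> _ _; rewrite cats0.
move=> H Ey; have [axy H1] := tpath_cons H; have [ayz H2] := tpath_cons H1.
case: (ADJ ayz) => Ez.
  by rewrite (IH _ _ H1 Ez) Ez cat_rcons.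
exfalso; move: Ey; rewrite Ez => /rcons_inj [] E.
have : x = z by rewrite -(rp_last x) -(rp_last z) E.
case: H => _ _ /= /andP[]; rewrite !inE negb_or => /andP[_ /negP hz] _ exz.
by apply: hz; rewrite exz eqxx.
Qed.



Variable E : {set {set V}}.

Definition Good (q : V) (e : {set V}) (ve : V) : Prop :=
  [/\ e \in edges T, e \notin E, lowend T r e ve, on_path T ve r q &
      ~ exists g, g \in E /\ edge_on_path T g ve q].

Lemma CASE1 (A B : V) p p1 y p2 : tpath T A B p -> p = p1 ++ y :: p2 ->
  rp y = rcons (rp (last A p1)) y ->
  (forall g, g \in path_edges T A p -> g \notin E) ->
  Good B [set last A p1; y] y.
Proof.
move=> H Ep Ey hE; subst p; set x := last A p1.
have [t1 t2] := tpath_cat H; have [axy t3] := tpath_cons t2.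
have Hrb := DESC t2 Ey.
have ine : [set x; y] \in path_edges T A (p1 ++ y :: p2).
  by rewrite PE_cat mem_cat PE_cons in_cons eqxx orbT.
split.
- rewrite inE; apply/existsP; exists x; apply/existsP; exists y; by rewrite axy eqxx.
- exact: hE.
- split; first by rewrite !inE eqxx orbT.
  exists x; split; first by rewrite !inE eqxx.
    by rewrite adj_neq.
  exists (rp y); split; first exact: rpP.
  by rewrite Ey -rcons_cons mem_rcons in_cons rp_mem orbT.
- exists (rp B); split; first exact: rpP.
  by rewrite Hrb -cat_cons mem_cat rp_mem.
- case=> g [gE [p'' [tp gin]]]; rewrite (tpath_uniq tp t3) in gin.
  apply: (negP (hE g _)) => //.
  by rewrite PE_cat mem_cat PE_cons in_cons gin !orbT.
Qed.

Lemma split_good (A B : V) p e : tpath T A B p -> e \in path_edges T A p ->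
  (forall g, g \in path_edges T A p -> g \notin E) ->
  (exists ve, Good A e ve) \/ (exists ve, Good B e ve).
Proof.
move=> H /PE_mem [p1 [y [p2 [Ep ->]]]] hE.
set x := last A p1.
have := H; rewrite Ep => /tpath_cat [_ /tpath_cons [axy _]].
case: (ADJ axy) => Ey.
  by right; exists y; apply: (CASE1 H Ep Ey hE).
left; exists x.
have [Hr Her] := tpath_rev H.
have hl : last A p = B by case: H.
move: Hr Her; rewrite Ep rev_split => Hr Her.
have Ly : last B (rev (belast y p2)) = y.
  by rewrite -hl Ep last_cat /= last_rev_belast.
have := CASE1 Hr (erefl _) _ _; rewrite Ly setUC; apply => //.
move=> g; rewrite Her mem_rev; rewrite -Ep; exact: hE.
Qed.

Lemma HEAD (q : V) : (exists e ve, Good q e ve) ->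
  exists H, [/\ H \in edges T, H \notin E &
     forall e ve, Good q e ve -> inD T r E H e].
Proof.
move=> [e0 [v0 g0]].
pose P := fun n => `[< exists e ve, Good q e ve /\ size (rp ve) = n >].
have exP : exists n, P n by exists (size (rp v0)); apply/asboolP; exists e0, v0.
case: (ex_minnP exP) => m /asboolP [H [vh [[hE hnE hlow hon hno] hs]]] hmin.
exists H; split => // e ve [eE enE elow eon eno].
have le : size (rp vh) <= size (rp ve).
  by rewrite hs; apply: hmin; apply/asboolP; exists e, ve.
have [s1 [E1 _]] := rp_pref (on_path_rp hon).
have [s2 [E2 _]] := rp_pref (on_path_rp eon).
have [t Et] := prefix_le (etrans (esym E1) E2) le.
have tt : tpath T vh ve t.
  by have := rpP ve; rewrite Et => /tpath_cat []; rewrite rp_last.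
have tq : tpath T vh q (t ++ s2).
  by have := rpP q; rewrite E2 Et -catA => /tpath_cat []; rewrite rp_last.
split; first by move: eE; rewrite inE.
exists vh, ve; split => //.
  exists (rp ve); split; first exact: rpP.
  by rewrite Et -cat_cons mem_cat rp_mem.
case=> g [gE [p'' [tp gin]]]; rewrite (tpath_uniq tp tt) in gin.
apply: hno; exists g; split => //; exists (t ++ s2); split => //.
by rewrite PE_cat mem_cat gin.
Qed.

End Graph.

Local Open Scope ring_scope.

Theorem lemma5 (R : realType) (X : finType) (T1 : phylo X) (n : nat)
  (Ts : 'I_n -> phylo X) (xt : {set pV T1} -> R) (rho : X)
  (E : {set {set pV T1}}) :
  LP_optimal T1 (incompat T1 Ts) xt ->
  round_final T1 (plab T1 rho) xt E ->
  forall Q, incompat T1 Ts Q -> exists e, e \in E /\ Lset T1 Q e.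
Proof.
move=> [[xpos hLP] _] [_ hfin] Q hQ.
apply: contrapT => hno.
have h1 := hLP Q hQ.
set r := plab T1 rho in hfin.
pose G q e := `[< exists ve, Good r E (plab T1 q) e ve >].
have cover : forall e, Lset T1 Q e -> exists2 q, q \in Q & G q e.
  move=> e [a [b [c [d [EQ qi hor]]]]].
  have key : forall a' b', a' \in Q -> b' \in Q ->
      (forall p, tpath T1 (plab T1 a') (plab T1 b') p ->
         forall g, g \in path_edges T1 (plab T1 a') p -> Lset T1 Q g) ->
      edge_on_path T1 e (plab T1 a') (plab T1 b') -> exists2 q, q \in Q & G q e.
    move=> a' b' ha hb hL [p [tp ein]].
    have hE : forall g, g \in path_edges T1 (plab T1 a') p -> g \notin E.
      move=> g gin; apply/negP => gE; apply: hno; exists g; split => //.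
      exact: hL tp g gin.
    case: (split_good r tp ein hE) => [[ve gd]|[ve gd]].
      by exists a' => //; apply/asboolP; exists ve.
    by exists b' => //; apply/asboolP; exists ve.
  case: hor => hor.
    apply: (key a b) => //; first by rewrite EQ !inE eqxx ?orbT.
      by rewrite EQ !inE eqxx ?orbT.
    move=> p tp g gin; exists a, b, c, d; split => //; left; by exists p.
  apply: (key c d) => //; first by rewrite EQ !inE eqxx ?orbT.
    by rewrite EQ !inE eqxx ?orbT.
  move=> p tp g gin; exists a, b, c, d; split => //; right; by exists p.
have step1 : \sum_(e in edges T1 | `[< Lset T1 Q e >]) xt e <=
    \sum_(q in Q) \sum_(e in edges T1 | G q e) xt e.
  rewrite big_mkcondr [X in _ <= X](eq_bigr (fun q => \sum_(e in edges T1) (if G q e then xt e else 0))); last by move=> q _; rewrite big_mkcondr.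
  rewrite exchange_big /=; apply: ler_sum => e eE.
  have nn : 0 <= \sum_(q in Q) (if G q e then xt e else 0).
    by apply: sumr_ge0 => q _; case: ifP => // _; exact: xpos.
  case: ifP => [/asboolP hL | _ //].
  have [q qQ Gq] := cover e hL.
  rewrite (bigD1 q) //= Gq lerDl; apply: sumr_ge0 => i _; case: ifP => // _.
  exact: xpos.
have step2 : forall q, \sum_(e in edges T1 | G q e) xt e < 1 / 4.
  move=> q; case: (pselect (exists e ve, Good r E (plab T1 q) e ve)) => hx.
    have [H [HE HnE hall]] := HEAD hx.
    apply: le_lt_trans (hfin H HE HnE).
    rewrite /wgt !big_mkcondr; apply: ler_sum => e eE.
    case: ifP => [/asboolP [ve gd]|_].
      by rewrite (asboolT (hall e ve gd)).
    by case: ifP => // _; exact: xpos.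
  rewrite big1; first by rewrite div1r invr_gt0 ltr0n.
  move=> e /andP[_ /asboolP [ve gd]]; exfalso; apply: hx; by exists e, ve.
have : \sum_(q in Q) \sum_(e in edges T1 | G q e) xt e < \sum_(q in Q) (1 / 4 : R).
  apply: ltr_sum => //.
  have : (0 < #|Q|)%N by case: hQ => ->.
  case/card_gt0P => q0 q0Q; apply/hasP; exists q0 => //; exact: mem_index_enum.
rewrite sumr_const; case: hQ => -> _.
have -> : (1 / 4 : R) *+ 4 = 1.
  by field.
move=> h2; have := le_lt_trans (le_trans h1 step1) h2; by rewrite ltxx.
Qed.
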